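(* Let $n\ge 1$, $X=\{1,\dots,n\}$, and identify the algebra $\mathcal{A}$ of functions $X\to\mathbb{R}$ (pointwise operations) with $\mathbb{R}^n$ with componentwise multiplication; let $e_1,\dots,e_n$ be the standard basis. Let $\sigma:X\to X$ be a bijection and $\tilde{\sigma}(f)=f\circ\sigma^{-1}$ the induced automorphism. Let $\Delta:\mathbb{R}^n\to\mathbb{R}^n$ be a linear operator whose standard matrix $[k_{li}]$ (with $k_{li}$ the $l$-th component of $\Delta(e_i)$) satisfies: (1) $k_{li}=0$ whenever $l\notin\{i,\sigma(i)\}$; (2) for every $i\in X$, writing $j=\sigma(i)$, $k_{ji}=-k_{jj}$. Then $\Delta$ is a $\tilde{\sigma}$-derivation, i.e. $\Delta(fg)=\tilde{\sigma}(f)\Delta(g)+\Delta(f)g$ for all $f,g\in\mathbb{R}^n$.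
   Context: Note $\tilde{\sigma}(e_i)=e_{\sigma(i)}$. *)

(* Defs.v *)
From HB Require Import structures.
From mathcomp Require Import all_boot all_order all_algebra all_fingroup.
From mathcomp Require Import reals.
Set Implicit Arguments. Unset Strict Implicit. Unset Printing Implicit Defensive.
Import GRing.Theory Num.Theory.
Local Open Scope ring_scope.

(* R^n (functions X -> R, X = 'I_n) represented as row vectors 'rV[R]_n. *)

Definition mulv (R : realType) (n : nat) (f g : 'rV[R]_n) : 'rV[R]_n :=
  \row_x (f 0 x * g 0 x).

Definition basis_e (R : realType) (n : nat) (i : 'I_n) : 'rV[R]_n :=
  delta_mx 0 i.

Definition sigma_tilde (R : realType) (n : nat) (s : 'S_n) (f : 'rV[R]_n)
  : 'rV[R]_n := \row_x f 0 ((s^-1)%g x).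

Definition kcoef (R : realType) (n : nat) (D : 'rV[R]_n -> 'rV[R]_n)
  (l i : 'I_n) : R := D (basis_e R i) 0 l.

(* Main.v *)
Require Import Defs.
From HB Require Import structures.
From mathcomp Require Import all_boot all_order all_algebra all_fingroup.
From mathcomp Require Import reals.
From mathcomp Require Import ring lra.
Import GRing.Theory Num.Theory.
Local Open Scope ring_scope.

Lemma keyD (R : realType) (n : nat) (s : 'S_n)
  (D : {linear 'rV[R]_n -> 'rV[R]_n})
  (h1 : forall l i : 'I_n, l != i -> l != s i -> kcoef D l i = 0)
  (h2 : forall i : 'I_n, kcoef D (s i) i = - kcoef D (s i) (s i))
  (f : 'rV[R]_n) (l : 'I_n) :
  D f 0 l = kcoef D l l * (f 0 l - f 0 ((s^-1)%g l)).
Proof.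
have -> : D f 0 l = \sum_i f 0 i * kcoef D l i.
  rewrite {1}[f]row_sum_delta linear_sum summxE.
  by apply: eq_bigr => i _; rewrite linearZ mxE.
set j := (s^-1)%g l.
have sj : s j = l by rewrite /j permKV.
rewrite (bigD1 l) //=.
have [ejl|nejl] := eqVneq j l.
  have kl0 : kcoef D l l = 0.
    have H := h2 j; rewrite sj ejl in H; lra.
  rewrite kl0 big1 ?mulr0 ?mul0r ?addr0 // => i nil.
  rewrite h1 ?mulr0 //; first by rewrite eq_sym.
  apply/negP => /eqP ls; move: nil; by rewrite -ejl /j ls permK eqxx.
rewrite (bigD1 j) ?nejl //= big1 ?addr0.
  have := h2 j; rewrite sj => ->; ring.
move=> i /andP[nil nij]; rewrite h1 ?mulr0 //; first by rewrite eq_sym.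
apply/negP => /eqP ls; move: nij; by rewrite /j ls permK eqxx.
Qed.

Theorem theorem2 (R : realType) (n : nat) (hn : (1 <= n)%N) (s : 'S_n)
  (D : {linear 'rV[R]_n -> 'rV[R]_n})
  (h1 : forall l i : 'I_n, l != i -> l != s i -> kcoef D l i = 0)
  (h2 : forall i : 'I_n, kcoef D (s i) i = - kcoef D (s i) (s i)) :
  forall f g : 'rV[R]_n,
    D (mulv f g) = mulv (sigma_tilde s f) (D g) + mulv (D f) g.
Proof.
move=> f g; apply/rowP => l.
rewrite !mxE !(@keyD R n s D h1 h2) !mxE /=; ring.
Qed.
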